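(* Under the hypotheses of the context, for every $T\ge1$, $$\sum_{t=0}^{T-1}\mathbb E\|x^t-\hat x^t\|^2\le\eta_g^2\Big(\sum_{s=1}^{T-1}(1-\delta_s)^s\Big)\sum_{t=0}^{T-2}\mathbb E\|\bar\Delta^t\|^2 .$$
   Context: A (possibly random) map $Q:\mathbb R^d\to\mathbb R^d$ is a quantizer with compression parameter $\delta\in(0,1]$ if $\mathbb E_Q\|Q(x)-x\|^2\le(1-\delta)\|x\|^2$ for all $x$, where $\mathbb E_Q$ is expectation over the internal randomness of $Q$; it is unbiased if $\mathbb E_Q[Q(x)]=x$ for all $x$. Hypotheses: $Q_s$ is an unbiased quantizer with parameter $\delta_s\in(0,1]$, $\eta_g>0$, $(\bar\Delta^t)_{t\ge0}$ are random vectors in $\mathbb R^d$ with finite second moments, $x^{t+1}=x^t+\eta_g\bar\Delta^t$, $\hat x^{t+1}=\hat x^t+Q_s(x^{t+1}-\hat x^t)$, $\hat x^0=x^0$, each application of $Q_s$ uses fresh internal randomness independent of $x^{t+1}-\hat x^t$, and $\mathbb E\langle x^t-\hat x^t,\bar\Delta^t\rangle=0$ for all $t$. *)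

(* Defs.v *)
(* Vectors of R^d are d.-tuple R, which
   MathComp-Analysis equips with the product (Borel) sigma-algebra. *)
From HB Require Import structures.
From mathcomp Require Import all_boot all_order all_algebra.
From mathcomp Require Import all_classical all_reals all_analysis.
Set Implicit Arguments. Unset Strict Implicit. Unset Printing Implicit Defensive.
Import Order.TTheory GRing.Theory Num.Theory.
Local Open Scope classical_set_scope.
Local Open Scope ring_scope.

Section Vectors.
Variables (R : realType) (d : nat).
Definition vadd (u v : d.-tuple R) : d.-tuple R := [tuple tnth u i + tnth v i | i < d].
Definition vsub (u v : d.-tuple R) : d.-tuple R := [tuple tnth u i - tnth v i | i < d].
Definition vscale (a : R) (v : d.-tuple R) : d.-tuple R := [tuple a * tnth v i | i < d].
Definition vdot (u v : d.-tuple R) : R := \sum_(i < d) tnth u i * tnth v i.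
Definition sqnorm (v : d.-tuple R) : R := vdot v v.
End Vectors.

Definition indep_elems {dO d1 d2} {Omega : measurableType dO}
  {T1 : measurableType d1} {T2 : measurableType d2} {R : realType}
  (P : probability Omega R) (X : Omega -> T1) (Y : Omega -> T2) : Prop :=
  forall (A : set T1) (B : set T2), measurable A -> measurable B ->
    P (X @^-1` A `&` Y @^-1` B) = (P (X @^-1` A) * P (Y @^-1` B))%E.

Definition has_law {dO dT} {Omega : measurableType dO} {T : measurableType dT}
  {R : realType} (P : probability Omega R) (Y : Omega -> T)
  (mu : probability T R) : Prop :=
  forall A : set T, measurable A -> P (Y @^-1` A) = mu A.

(* Q : R^d -> (Omq -> R^d), a random map with internal randomness w ~ Pq,
   is a quantizer with compression parameter delta. *)
Definition is_quantizer {dq} {Omq : measurableType dq} {R : realType} {d : nat}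
  (Pq : probability Omq R) (Q : d.-tuple R -> Omq -> d.-tuple R) (delta : R) : Prop :=
  forall x : d.-tuple R,
    ('E_Pq[fun w => sqnorm (vsub (Q x w) x)] <= ((1 - delta) * sqnorm x)%:E)%E.

Definition is_unbiased {dq} {Omq : measurableType dq} {R : realType} {d : nat}
  (Pq : probability Omq R) (Q : d.-tuple R -> Omq -> d.-tuple R) : Prop :=
  forall (x : d.-tuple R) (i : 'I_d), ('E_Pq[fun w => tnth (Q x w) i] = (tnth x i)%:E)%E.

(* Main.v *)
Require Import Defs.
From HB Require Import structures.
From mathcomp Require Import all_boot all_order all_algebra.
From mathcomp Require Import all_classical all_reals all_analysis.
From mathcomp Require Import measurable_realfun ring lra.
Import Order.TTheory GRing.Theory Num.Theory.
Local Open Scope classical_set_scope.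
Local Open Scope ring_scope.
Section meas.
Context (R : realType) (d : nat) (dT : measure_display) (T : measurableType dT).
Implicit Types f g : T -> d.-tuple R.

Lemma mvadd f g : measurable_fun setT f -> measurable_fun setT g ->
  measurable_fun setT (fun w => vadd (f w) (g w)).
Proof.
move=> /measurable_fun_tnthP mf /measurable_fun_tnthP mg.
apply/measurable_fun_tnthP => i.
rewrite /comp; under eq_fun do rewrite /vadd tnth_mktuple.
exact: measurable_funD (mf i) (mg i).
Qed.

Lemma mvsub f g : measurable_fun setT f -> measurable_fun setT g ->
  measurable_fun setT (fun w => vsub (f w) (g w)).
Proof.
move=> /measurable_fun_tnthP mf /measurable_fun_tnthP mg.
apply/measurable_fun_tnthP => i.
rewrite /comp; under eq_fun do rewrite /vsub tnth_mktuple.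
exact: measurable_funB (mf i) (mg i).
Qed.

Lemma mvscale a f : measurable_fun setT f ->
  measurable_fun setT (fun w => vscale a (f w)).
Proof.
move=> /measurable_fun_tnthP mf.
apply/measurable_fun_tnthP => i.
rewrite /comp; under eq_fun do rewrite /vscale tnth_mktuple.
exact: measurable_funM (mf i).
Qed.

End meas.
Arguments mvadd {R d dT T f g}.
Arguments mvsub {R d dT T f g}.
Arguments mvscale {R d dT T} a {f}.


Section alg.
Context (R : realType) (d : nat).
Implicit Types u v w : d.-tuple R.

Lemma sqnorm_ge0 u : 0 <= sqnorm u.
Proof. by rewrite /sqnorm /vdot sumr_ge0 // => i _; exact: sqr_ge0. Qed.

Lemma sqnorm_vadd_scale u v a :
  sqnorm (vadd u (vscale a v)) = sqnorm u + ((2 * a) * vdot u v + a ^+ 2 * sqnorm v).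
Proof.
rewrite /sqnorm /vdot !mulr_sumr -!big_split /=; apply: eq_bigr => i _.
rewrite /vadd /vscale !tnth_mktuple; ring.
Qed.

Lemma vsub_vadd_l u v w : vsub (vadd u v) w = vadd (vsub u w) v.
Proof. by apply: eq_from_tnth => i; rewrite /vsub /vadd !tnth_mktuple addrAC. Qed.

Lemma vsub_vadd_r u v w : vsub u (vadd v w) = vsub (vsub u v) w.
Proof. by apply: eq_from_tnth => i; rewrite /vsub /vadd !tnth_mktuple opprD addrA. Qed.

Lemma sqnorm_vsubC u v : sqnorm (vsub u v) = sqnorm (vsub v u).
Proof.
rewrite /sqnorm /vdot; apply: eq_bigr => i _; rewrite /vsub !tnth_mktuple; ring.
Qed.

Lemma vdot_bound u v : `|vdot u v| <= sqnorm u + sqnorm v.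
Proof.
rewrite /sqnorm /vdot -big_split /=; apply: (le_trans (ler_norm_sum _ _ _)).
apply: ler_sum => i _; rewrite normrM.
have h1 := sqr_ge0 (`|tnth u i| - `|tnth v i|).
have h2 : `|tnth u i| ^+ 2 = tnth u i * tnth u i by rewrite real_normK ?expr2 // num_real.
have h3 : `|tnth v i| ^+ 2 = tnth v i * tnth v i by rewrite real_normK ?expr2 // num_real.
have h4 := normr_ge0 (tnth u i). have h5 := normr_ge0 (tnth v i).
nra.
Qed.
Lemma mvdot (dT : measure_display) (T : measurableType dT) (f g : T -> d.-tuple R) : measurable_fun setT f -> measurable_fun setT g ->
  measurable_fun setT (fun x => vdot (f x) (g x)).
Proof.
move=> /measurable_fun_tnthP mf /measurable_fun_tnthP mg.
rewrite /vdot; apply: measurable_sum => i.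
exact: measurable_funM (mf i) (mg i).
Qed.
End alg.

Section step.
Context (R : realType) (d : nat)
  (dO : measure_display) (Omega : measurableType dO) (P : probability Omega R).
Local Open Scope ereal_scope.

Lemma int_sq (f : Omega -> R) : measurable_fun setT f -> (forall w, (0 <= f w)%R) ->
  'E_P[f] < +oo -> P.-integrable setT (EFin \o f).
Proof.
move=> mf f0 fin; apply/integrableP; split; first exact/measurable_EFinP.
rewrite unlock in fin; apply: le_lt_trans fin; rewrite le_eqVlt; apply/orP; left.
apply/eqP; apply: eq_integral => w _ /=; by rewrite ger0_norm.
Qed.

Lemma step (e D : Omega -> d.-tuple R) (a : R) :
  measurable_fun setT e -> measurable_fun setT D ->
  'E_P[fun w => sqnorm (e w)] < +oo -> 'E_P[fun w => sqnorm (D w)] < +oo ->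
  'E_P[fun w => vdot (e w) (D w)] = 0 ->
  'E_P[fun w => sqnorm (vadd (e w) (vscale a (D w)))] =
  'E_P[fun w => sqnorm (e w)] + (a ^+ 2)%:E * 'E_P[fun w => sqnorm (D w)].
Proof.
move=> me mD fe fD h0.
have mse : measurable_fun setT (fun w => sqnorm (e w)) by exact: mvdot.
have msD : measurable_fun setT (fun w => sqnorm (D w)) by exact: mvdot.
have mdot : measurable_fun setT (fun w => vdot (e w) (D w)) by exact: mvdot.
have ie := int_sq _ mse (fun w => sqnorm_ge0 _ _ _) fe.
have iD := int_sq _ msD (fun w => sqnorm_ge0 _ _ _) fD.
have idot : P.-integrable setT (EFin \o (fun w => vdot (e w) (D w))).
  apply: (le_integrable _ _ _ (integrableD _ ie iD)) => //.
  - exact/measurable_EFinP.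
  - move=> w _ /=; rewrite lee_fin.
    rewrite (@ger0_norm _ (sqnorm _ + _)) ?addr_ge0 ?sqnorm_ge0 //.
    exact: vdot_bound.
rewrite unlock in h0 *.
have E w : (sqnorm (vadd (e w) (vscale a (D w))))%:E =
   (sqnorm (e w))%:E + ((2 * a)%:E * (vdot (e w) (D w))%:E + (a ^+ 2)%:E * (sqnorm (D w))%:E).
  by rewrite sqnorm_vadd_scale !EFinD !EFinM.
under eq_integral => w _ do rewrite E.
rewrite integralD //; last first.
  apply: integrableD => //; exact: integrableZl.
rewrite integralD //; try exact: integrableZl.
rewrite !integralZl //.
have -> : \int[P]_x (vdot (e x) (D x))%:E = 0 by [].
by rewrite mule0 add0e.
Qed.

End step.
Arguments step {R d dO Omega P}.


Lemma msq_lem (R : realType) (d : nat) : measurable_fun [set: d.-tuple R] (@sqnorm R d).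
Proof.
have := (@mvdot R d _ _ id id (@measurable_id _ _ _) (@measurable_id _ _ _)).
by apply: eq_measurable_fun.
Qed.

Lemma msub_lem (R : realType) (d : nat) :
  measurable_fun [set: d.-tuple R * d.-tuple R] (fun p => vsub p.1 p.2).
Proof. exact: (@mvsub R d _ _ fst snd measurable_fst measurable_snd). Qed.

Section key.
Context (R : realType) (d : nat)
  (dO : measure_display) (Omega : measurableType dO) (P : probability Omega R)
  (dq : measure_display) (Omq : measurableType dq) (Pq : probability Omq R)
  (Qs : d.-tuple R -> Omq -> d.-tuple R) (delta : R).
Hypothesis hQ : is_quantizer Pq Qs delta.
Hypothesis mQ : measurable_fun [set: d.-tuple R * Omq] (fun p => Qs p.1 p.2).
Hypothesis hd : delta <= 1.
Hypothesis msq : measurable_fun [set: d.-tuple R] (@sqnorm R d).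
Hypothesis msub : measurable_fun [set: d.-tuple R * d.-tuple R] (fun p => vsub p.1 p.2).

Lemma key (V : Omega -> d.-tuple R) (W : Omega -> Omq) :
  measurable_fun setT V -> measurable_fun setT W -> has_law P W Pq ->
  indep_elems P W V ->
  ('E_P[fun w => sqnorm (vsub (Qs (V w) (W w)) (V w))]
    <= (1 - delta)%:E * 'E_P[fun w => sqnorm (V w)])%E.
Proof.
move=> mV mW hW hWV.
pose phi w := (W w, V w).
have mphi : measurable_fun setT phi by exact: measurable_fun_pair.
pose phim : {mfun Omega >-> (Omq * d.-tuple R)%type} :=
  HB.pack phi (isMeasurableFun.Build _ _ _ _ phi mphi).
pose Vm : {mfun Omega >-> d.-tuple R} :=
  HB.pack V (isMeasurableFun.Build _ _ _ _ V mV).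
pose nu := distribution P Vm.
pose g (p : Omq * d.-tuple R) := (sqnorm (vsub (Qs p.2 p.1) p.2))%:E.
have mg : measurable_fun setT g.
  have mQ' : measurable_fun setT (fun p : Omq * d.-tuple R => Qs p.2 p.1).
    exact: (measurableT_comp mQ (measurable_fun_pair measurable_snd measurable_fst)).
  have ms : measurable_fun setT (fun p : Omq * d.-tuple R => vsub (Qs p.2 p.1) p.2).
    exact: (measurableT_comp msub (measurable_fun_pair mQ' measurable_snd)).
  apply/measurable_EFinP; exact: (measurableT_comp msq ms).
have g0 p : (0 <= g p)%E by rewrite lee_fin /sqnorm /vdot sumr_ge0 // => i _; exact: sqr_ge0.
have E1 : ('E_P[fun w => sqnorm (vsub (Qs (V w) (W w)) (V w))] =
    \int[distribution P phim]_p g p)%E.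
  rewrite unlock /distribution ge0_integral_pushforward //.
have E2 : (\int[distribution P phim]_p g p = \int[(Pq \x nu)%E]_p g p)%E.
  apply: eq_measure_integral => A mA _.
  apply/esym; apply: product_measure_unique => // B C mB mC.
  rewrite /distribution /pushforward /nu /distribution /pushforward /=.
  change (P (phi @^-1` (B `*` C)) = (Pq B * P (V @^-1` C))%E).
  rewrite -hW // -hWV //.
rewrite E1 E2 fubini_tonelli2 //.
have q0 : (0 <= 1 - delta) by rewrite subr_ge0.
apply: (@le_trans _ _ (\int[nu]_v ((1 - delta)%:E * (sqnorm v)%:E))%E).
  apply: ge0_le_integral => //.
  - by move=> v _; apply: integral_ge0 => w _; exact: g0.
  - exact: (measurable_fun_fubini_tonelli_G g mg).
  - apply: emeasurable_funM => //; exact/measurable_EFinP.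
  - move=> v _; rewrite /fubini_G.
    have := hQ v; rewrite unlock => H; rewrite -EFinM; exact: H.
have sq0 (y : d.-tuple R) : 0 <= sqnorm y.
  by rewrite /sqnorm /vdot sumr_ge0 // => i _; exact: sqr_ge0.
rewrite ge0_integralZl_EFin //; first last.
- exact/measurable_EFinP.
- by move=> y _; rewrite lee_fin.
apply: lee_wpmul2l; first by rewrite lee_fin.
rewrite unlock /nu /distribution ge0_integral_pushforward //.
- exact/measurable_EFinP.
- by move=> y _; rewrite lee_fin.
Qed.
End key.
Arguments key {R d dO Omega P dq Omq Pq Qs delta} hQ mQ hd msq msub {V W}.


Section real.
Context (R : realFieldType).

Lemma bound_a (a D : nat -> R) (q c : R) : 0 <= q -> 0 <= c ->
  a 0%N = 0 -> (forall t, a t.+1 <= q * (a t + c * D t)) ->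
  forall t, a t <= c * \sum_(0 <= k < t) q ^+ (t - k) * D k.
Proof.
move=> q0 c0 a0 rec; elim=> [|t IH]; first by rewrite a0 big_geq // mulr0.
apply: (le_trans (rec t)).
have -> : \sum_(0 <= k < t.+1) q ^+ (t.+1 - k) * D k =
    q * (\sum_(0 <= k < t) q ^+ (t - k) * D k + D t).
  rewrite big_nat_recr //= subSnn expr1 mulrDr mulr_sumr; congr (_ + _).
  apply: eq_big_nat => k /andP[_ kt].
  by rewrite subSn ?(ltnW kt) // exprS mulrA.
rewrite mulrCA; apply: ler_wpM2l => //.
rewrite mulrDr; apply: lerD => //.
Qed.

Lemma sum_exchange (D : nat -> R) (q : R) (T : nat) :
  \sum_(0 <= t < T) \sum_(0 <= k < t) q ^+ (t - k) * D k =
  \sum_(0 <= k < T) D k * \sum_(1 <= s < T - k) q ^+ s.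
Proof.
elim: T => [|T IH]; first by rewrite !big_geq.
rewrite big_nat_recr //= IH [in RHS]big_nat_recr //= subSnn.
rewrite [X in _ = _ + X](_ : _ = 0); last by rewrite big_geq // mulr0.
rewrite addr0 -big_split /=.
apply: eq_big_nat => k /andP[_ kT].
rewrite subSn ?(ltnW kT) // big_nat_recr /=; last by rewrite subn_gt0.
by rewrite mulrDr [q ^+ _ * _]mulrC.
Qed.

Lemma real_bound (a D : nat -> R) (q c : R) (T : nat) : 0 <= q -> 0 <= c ->
  (forall t, 0 <= D t) -> a 0%N = 0 -> (forall t, a t.+1 <= q * (a t + c * D t)) ->
  (1 <= T)%N ->
  \sum_(0 <= t < T) a t <= (c * \sum_(1 <= s < T) q ^+ s) * \sum_(0 <= t < T.-1) D t.
Proof.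
move=> q0 c0 D0 a0 rec T1.
apply: (@le_trans _ _ (\sum_(0 <= t < T) c * \sum_(0 <= k < t) q ^+ (t - k) * D k)).
  by apply: ler_sum => t _; exact: bound_a.
rewrite -mulr_sumr -mulrA; apply: ler_wpM2l => //.
rewrite sum_exchange.
case: T T1 => // n _ /=.
rewrite big_nat_recr //= subSnn [X in _ + X <= _](_ : _ = 0) ?addr0; last first.
  by rewrite big_geq // mulr0.
rewrite mulr_sumr; apply: ler_sum_nat => k /andP[_ kn].
rewrite mulrC; apply: ler_wpM2r => //.
rewrite [leRHS](big_cat_nat _ (n := n.+1 - k)) //=; last by rewrite leq_subr.
  rewrite lerDl; apply: sumr_ge0 => i _; exact: exprn_ge0.
by rewrite subSn ?(ltnW kn).
Qed.
End real.

Theorem mainTheorem9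
  (R : realType) (d : nat)
  (dO : measure_display) (Omega : measurableType dO) (P : probability Omega R)
  (dq : measure_display) (Omq : measurableType dq) (Pq : probability Omq R)
  (Qs : d.-tuple R -> Omq -> d.-tuple R) (delta_s eta_g : R)
  (Delta x xhat : nat -> Omega -> d.-tuple R) (xi : nat -> Omega -> Omq) :
  (* Q_s is an unbiased quantizer with parameter delta_s in (0,1] *)
  0 < delta_s <= 1 ->
  is_quantizer Pq Qs delta_s ->
  is_unbiased Pq Qs ->
  measurable_fun [set: d.-tuple R * Omq] (fun p => Qs p.1 p.2) ->
  0 < eta_g ->
  (* Delta^t random vectors with finite second moments *)
  (forall t, measurable_fun [set: Omega] (Delta t)) ->
  (forall t, ('E_P[fun w => sqnorm (Delta t w)] < +oo)%E) ->
  measurable_fun [set: Omega] (x 0%N) ->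
  (forall t w, x t.+1 w = vadd (x t w) (vscale eta_g (Delta t w))) ->
  (* x_hat^{t+1} = x_hat^t + Q_s(x^{t+1} - x_hat^t), with fresh randomness xi t *)
  (forall w, xhat 0%N w = x 0%N w) ->
  (forall t w, xhat t.+1 w =
     vadd (xhat t w) (Qs (vsub (x t.+1 w) (xhat t w)) (xi t w))) ->
  (forall t, measurable_fun [set: Omega] (xi t)) ->
  (forall t, has_law P (xi t) Pq) ->
  (forall t, indep_elems P (xi t) (fun w => vsub (x t.+1 w) (xhat t w))) ->
  (* E <x^t - x_hat^t, Delta^t> = 0 *)
  (forall t, ('E_P[fun w => vdot (vsub (x t w) (xhat t w)) (Delta t w)] = 0)%E) ->
  forall T : nat, (1 <= T)%N ->
  (\sum_(0 <= t < T) 'E_P[fun w => sqnorm (vsub (x t w) (xhat t w))]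
   <= (eta_g ^+ 2 * \sum_(1 <= s < T) (1 - delta_s) ^+ s)%:E
      * \sum_(0 <= t < T.-1) 'E_P[fun w => sqnorm (Delta t w)])%E.
Proof.
move=> /andP[d0 d1] hQ hU mQ heta mDelta fDelta mx0 hx hxh0 hxh mxi hlaw hind hdot T T1.
have mx : forall t, measurable_fun setT (x t).
  elim=> // t IH.
  have -> : x t.+1 = fun w => vadd (x t w) (vscale eta_g (Delta t w)).
    by apply/funext => w; rewrite hx.
  exact: mvadd IH (mvscale _ (mDelta t)).
pose V t w := vsub (x t.+1 w) (xhat t w).
have mxh : forall t, measurable_fun setT (xhat t).
  elim=> [|t IH].
    by rewrite (_ : xhat 0%N = x 0%N) //; apply/funext => w; rewrite hxh0.
  have -> : xhat t.+1 = fun w => vadd (xhat t w) (Qs (V t w) (xi t w)).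
    by apply/funext => w; rewrite hxh.
  refine (mvadd IH _).
  exact: (measurableT_comp mQ (measurable_fun_pair (mvsub (mx t.+1) IH) (mxi t))).
have mV t : measurable_fun setT (V t) by exact: mvsub (mx t.+1) (mxh t).
have me t : measurable_fun setT (fun w => vsub (x t w) (xhat t w)).
  exact: mvsub (mx t) (mxh t).
pose A t := ('E_P[fun w => sqnorm (vsub (x t w) (xhat t w))])%E.
pose Dd t := ('E_P[fun w => sqnorm (Delta t w)])%E.
have A0 : A 0%N = 0%E.
  rewrite /A (_ : (fun w => _) = cst 0) ?expectation_cst //.
  apply/funext => w; rewrite hxh0 /sqnorm /vdot /= big1 // => i _.
  by rewrite /vsub tnth_mktuple subrr mulr0.
have rec t : (A t < +oo)%E ->
    (A t.+1 <= (1 - delta_s)%:E * (A t + (eta_g ^+ 2)%:E * Dd t))%E.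
  move=> fin.
  have eq1 : (fun w => sqnorm (vsub (x t.+1 w) (xhat t.+1 w))) =
      fun w => sqnorm (vsub (Qs (V t w) (xi t w)) (V t w)).
    by apply/funext => w; rewrite hxh vsub_vadd_r sqnorm_vsubC.
  have eq2 : (fun w => sqnorm (V t w)) =
      fun w => sqnorm (vadd (vsub (x t w) (xhat t w)) (vscale eta_g (Delta t w))).
    by apply/funext => w; rewrite /V hx vsub_vadd_l.
  rewrite /A eq1.
  apply: le_trans (key hQ mQ d1 (msq_lem R d) (msub_lem R d) (mV t) (mxi t) (hlaw t) (hind t)) _.
  rewrite eq2 step //.
have A_ge0 t : (0 <= A t)%E.
  by apply: expectation_ge0 => w; exact: sqnorm_ge0.
have D_ge0 t : (0 <= Dd t)%E.
  by apply: expectation_ge0 => w; exact: sqnorm_ge0.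
have finD t : Dd t \is a fin_num by rewrite ge0_fin_numE //; exact: fDelta.
have fin : forall t, (A t < +oo)%E.
  elim=> [|t IH]; first by rewrite A0 ltry.
  apply: le_lt_trans (rec t IH) _.
  have finA : A t \is a fin_num by rewrite ge0_fin_numE.
  by rewrite -(fineK finA) -(fineK (finD t)) -[X in (_ * (_ + X))%E]EFinM -EFinD -EFinM ltry.
have HA t : A t = (fine (A t))%:E by rewrite fineK // ge0_fin_numE.
have HD t : Dd t = (fine (Dd t))%:E by rewrite fineK.
have -> : (\sum_(0 <= t < T) 'E_P[fun w => sqnorm (vsub (x t w) (xhat t w))])%E =
    (\sum_(0 <= t < T) fine (A t))%:E.
  by rewrite -sumEFin; apply: eq_bigr => t _; exact: HA.
have -> : (\sum_(0 <= t < T.-1) 'E_P[fun w => sqnorm (Delta t w)])%E =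
    (\sum_(0 <= t < T.-1) fine (Dd t))%:E.
  by rewrite -sumEFin; apply: eq_bigr => t _; exact: HD.
rewrite -EFinM lee_fin.
apply: real_bound => //.
- by rewrite subr_ge0.
- exact: exprn_ge0 (ltW heta).
- by move=> t; apply: fine_ge0.
- by rewrite A0.
- move=> t; have := rec t (fin t).
  by rewrite (HA t.+1) (HA t) (HD t) -[X in (_ * (_ + X))%E]EFinM -EFinD -EFinM lee_fin.
Qed.
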